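(* Let $X$ be a Banach space and let $\Lambda\subset B_{X^*}$ be weak$^*$ compact with $\overline{\mathrm{co}}^{w^*}\Lambda=B_{X^*}$. If the dual norm is Fréchet differentiable at every $x^*\in\Lambda\cap S_{X^*}$, then $X^*$ is Fréchet smooth.
   Context: $B_{X^*}$ and $S_{X^*}$ are the closed unit ball and unit sphere of $X^*$; $\overline{\mathrm{co}}^{w^*}$ denotes the weak$^*$ closed convex hull. $X^*$ is Fréchet smooth if the dual norm is Fréchet differentiable at every nonzero point of $X^*$. *)

(* Defs.v *)
From HB Require Import structures.
From mathcomp Require Import all_boot all_order all_algebra.
From mathcomp Require Import all_classical all_reals all_analysis.
Set Implicit Arguments. Unset Strict Implicit. Unset Printing Implicit Defensive.
Import Order.TTheory GRing.Theory Num.Theory.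
Import numFieldNormedType.Exports.
Local Open Scope classical_set_scope.
Local Open Scope ring_scope.

Section Dual.
Variables (R : realType) (X : normedModType R).

Definition is_dual (f : X -> R) : Prop :=
  (forall (a : R) (x y : X), f (a *: x + y) = a * f x + f y) /\
  (exists M : R, forall x : X, `|f x| <= M * `|x|).

Definition dualsp : set (X -> R) := [set f | is_dual f].

Definition dual_norm (f : X -> R) : R :=
  sup [set `|f x| | x in [set x : X | `|x| <= 1]].

Definition dual_ball : set (X -> R) := [set f | is_dual f /\ dual_norm f <= 1].
Definition dual_sphere : set (X -> R) := [set f | is_dual f /\ dual_norm f = 1].

Definition conv_hull (A : set (X -> R)) : set (X -> R) :=
  [set f | exists (n : nat) (l : 'I_n -> R) (g : 'I_n -> X -> R),
      (forall i, 0 <= l i) /\ \sum_(i < n) l i = 1 /\ (forall i, A (g i)) /\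
      f = (fun x => \sum_(i < n) l i * g i x)].

(* The weak* topology on X^* is the subspace topology induced by the
   topology of pointwise convergence {ptws X -> R}. *)
Definition wstar_compact (A : set (X -> R)) : Prop :=
  A `<=` dualsp /\ @compact {ptws X -> R} A.

Definition wstar_closure (A : set (X -> R)) : set (X -> R) :=
  @closure {ptws X -> R} A `&` dualsp.

Definition dual_norm_frechet_at (f : X -> R) : Prop :=
  exists L : (X -> R) -> R,
    [/\ (forall (a : R) (h k : X -> R), dualsp h -> dualsp k ->
          L (fun x => a * h x + k x) = a * L h + L k),
        (exists M : R, forall h, dualsp h -> `|L h| <= M * dual_norm h) &
        (forall eps : R, 0 < eps -> exists2 delta : R, 0 < delta &
          forall h, dualsp h -> dual_norm h < delta ->
            `|dual_norm (fun x => f x + h x) - dual_norm f - L h|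
              <= eps * dual_norm h)].

Definition dual_frechet_smooth : Prop :=
  forall f, dualsp f -> f <> (fun _ => 0) -> dual_norm_frechet_at f.
End Dual.

(* Main.v *)
Require Import Defs.
From mathcomp Require Import all_boot all_order all_algebra.
From mathcomp Require Import all_classical all_reals all_analysis.
From mathcomp Require Import ring lra.
Import Order.TTheory GRing.Theory Num.Theory.
Import numFieldNormedType.Exports.
Local Open Scope classical_set_scope.
Local Open Scope ring_scope.
Set Implicit Arguments. Unset Strict Implicit. Unset Printing Implicit Defensive.

Section Basic.
Variables (R : realType) (X : normedModType R).
Implicit Types (f g h : X -> R) (x y z : X).

Lemma dlin f : is_dual f -> forall a x y, f (a *: x + y) = a * f x + f y.
Proof. by case. Qed.

Lemma dual0 f : is_dual f -> f 0 = 0.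
Proof.
move=> df; have := dlin df 1 0 0; rewrite scaler0 addr0 mul1r => h.
by apply/(addrI (f 0)); rewrite addr0 -h.
Qed.

Lemma dualD f x y : is_dual f -> f (x + y) = f x + f y.
Proof. by move=> df; have := dlin df 1 x y; rewrite scale1r mul1r. Qed.

Lemma dualZ f a x : is_dual f -> f (a *: x) = a * f x.
Proof. by move=> df; have := dlin df a x 0; rewrite (dual0 df) !addr0. Qed.

Lemma dualN f x : is_dual f -> f (- x) = - f x.
Proof. by move=> df; rewrite -scaleN1r dualZ // mulN1r. Qed.

Lemma dual_bnd f : is_dual f -> exists M, 0 <= M /\ forall x, `|f x| <= M * `|x|.
Proof.
case=> _ [M HM]; exists `|M|; split => // x.
by apply: (le_trans (HM x)); rewrite ler_wpM2r // real_ler_norm ?num_real.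
Qed.

Lemma has_sup_dn f : is_dual f ->
  has_sup [set `|f x| | x in [set x : X | `|x| <= 1]].
Proof.
move=> df; split; first by exists `|f 0|, 0 => //=; rewrite normr0.
have [M [M0 HM]] := dual_bnd df; exists M => _ [x /= x1 <-].
by apply: (le_trans (HM x)); rewrite -[leRHS]mulr1 ler_wpM2l.
Qed.

Lemma dn_ge f x : is_dual f -> `|x| <= 1 -> `|f x| <= dual_norm f.
Proof.
move=> df x1; have [_ hs] := has_sup_dn df.
by apply: (ub_le_sup hs); exists x.
Qed.

Lemma dn_ge' f x : is_dual f -> `|x| <= 1 -> f x <= dual_norm f.
Proof. by move=> df x1; apply: le_trans (dn_ge df x1); exact: ler_norm. Qed.

Lemma dn_ge0 f : is_dual f -> 0 <= dual_norm f.
Proof. by move=> df; apply: le_trans (dn_ge (x := 0) df _); rewrite ?normr0. Qed.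

Lemma dn_le f M : is_dual f -> (forall x, `|x| <= 1 -> `|f x| <= M) ->
  dual_norm f <= M.
Proof.
move=> df HM; apply: ge_sup; first by exists `|f 0|, 0 => //=; rewrite normr0.
by move=> _ [x /= x1 <-]; exact: HM.
Qed.

Lemma dn_adh f e : is_dual f -> 0 < e ->
  exists x, `|x| <= 1 /\ dual_norm f - e < f x.
Proof.
move=> df e0; have [_ [x /= x1 <-] lt] := sup_adherent e0 (has_sup_dn df).
have [fx0|fx0] := lerP 0 (f x).
  by exists x; split => //; move: lt; rewrite ger0_norm.
exists (- x); split; first by rewrite normrN.
by move: lt; rewrite ltr0_norm // dualN.
Qed.

Lemma dn_mul f x : is_dual f -> `|f x| <= dual_norm f * `|x|.
Proof.
move=> df; have [->|x0] := eqVneq x 0.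
  by rewrite (dual0 df) !normr0 mulr0.
have nx : 0 < `|x| by rewrite normr_gt0.
have := dn_ge (x := `|x|^-1 *: x) df.
rewrite normrZ normfV normr_id mulVf ?gt_eqF // lexx => /(_ isT).
rewrite dualZ // normrM normfV normr_id ler_pdivrMl //.
by rewrite mulrC.
Qed.

Lemma dn0_eq f : is_dual f -> dual_norm f = 0 -> forall x, f x = 0.
Proof.
move=> df n0 x; apply/normr0_eq0/eqP; rewrite eq_le normr_ge0 andbT.
by have := dn_mul x df; rewrite n0 mul0r.
Qed.

Lemma dual_comb a f g : is_dual f -> is_dual g -> is_dual (fun x => a * f x + g x).
Proof.
move=> df dg; split.
  move=> b x y; rewrite !dlin //; ring.
have [M [M0 HM]] := dual_bnd df; have [K [K0 HK]] := dual_bnd dg.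
exists (`|a| * M + K) => x; apply: (le_trans (ler_normD _ _)).
rewrite mulrDl normrM -mulrA lerD // ler_wpM2l //.
Qed.

Lemma dual_zero : is_dual (fun _ : X => 0 : R).
Proof. split; first by move=> *; ring. by exists 0 => x; rewrite normr0 mul0r. Qed.

Lemma dual_scale a f : is_dual f -> is_dual (fun x => a * f x).
Proof.
move=> df; have := dual_comb a df dual_zero.
by congr is_dual; apply: funext => x; rewrite addr0.
Qed.

Lemma dual_add f g : is_dual f -> is_dual g -> is_dual (fun x => f x + g x).
Proof.
move=> df dg; have := dual_comb 1 df dg.
by congr is_dual; apply: funext => x; rewrite mul1r.
Qed.

Lemma dn_add f g : is_dual f -> is_dual g ->
  dual_norm (fun x => f x + g x) <= dual_norm f + dual_norm g.
Proof.
move=> df dg; apply: dn_le; first exact: dual_add.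
move=> x x1; apply: le_trans (ler_normD _ _) _.
by rewrite lerD // dn_ge.
Qed.

Lemma dn_scale a f : is_dual f -> dual_norm (fun x => a * f x) = `|a| * dual_norm f.
Proof.
move=> df; apply/eqP; rewrite eq_le; apply/andP; split.
  apply: dn_le; first exact: dual_scale.
  by move=> x x1; rewrite normrM ler_wpM2l // dn_ge.
have [->|a0] := eqVneq a 0.
  by rewrite normr0 mul0r dn_ge0 //; exact: dual_scale.
rewrite -ler_pdivlMl ?normr_gt0 //; apply: dn_le => // x x1.
rewrite ler_pdivlMl ?normr_gt0 // -normrM.
by apply: (dn_ge (f := fun x => a * f x)) => //; exact: dual_scale.
Qed.

End Basic.

Section PartA.
Variables (R : realType) (X : normedModType R).
Implicit Types (f g h : X -> R) (x y z : X).

Lemma L0 (L : (X -> R) -> R) :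
  (forall (a : R) (h k : X -> R), dualsp h -> dualsp k ->
          L (fun x => a * h x + k x) = a * L h + L k) ->
  L (fun _ => 0) = 0.
Proof.
move=> Llin; have := Llin 1 _ _ (@dual_zero R X) (@dual_zero R X).
have -> : (fun x : X => 1 * (0:R) + 0) = (fun _ => 0).
  by apply: funext => x; rewrite mul1r addr0.
by rewrite mul1r => h; apply/(addrI (L (fun _ => 0))); rewrite addr0 -h.
Qed.

Lemma frechet_slice lam : is_dual lam -> dual_norm lam = 1 ->
  dual_norm_frechet_at lam ->
  forall eps, 0 < eps -> exists2 d, 0 < d & forall x z h, `|x| <= 1 -> `|z| <= 1 ->
    1 - d < lam x -> 1 - d < lam z -> is_dual h -> dual_norm h <= 1 ->
    h x - h z <= eps.
Proof.
move=> dl nl [L [Llin _ Hfr]] eps eps0.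
have e4 : 0 < eps / 4 by rewrite divr_gt0.
have [dF dF0 HF] := Hfr _ e4.
pose t := dF / 2.
have t0 : 0 < t by rewrite divr_gt0.
have tdF : t < dF by rewrite /t; lra.
exists (t * eps / 4); first by rewrite !divr_gt0 // mulr_gt0.
move=> x z h x1 z1 lx lz dh nh.
pose h1 := fun y => t * h y; pose h2 := fun y => - t * h y.
have d1 : is_dual h1 by exact: dual_scale.
have d2 : is_dual h2 by exact: dual_scale.
have nh0 := dn_ge0 dh.
have n1 : dual_norm h1 = t * dual_norm h by rewrite dn_scale // gtr0_norm.
have n2 : dual_norm h2 = t * dual_norm h by rewrite dn_scale // normrN gtr0_norm.
have tn : t * dual_norm h <= t by rewrite -[leRHS]mulr1 ler_wpM2l // ltW.
have H1 := HF h1 d1 ltac:(rewrite n1; lra).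
have H2 := HF h2 d2 ltac:(rewrite n2; lra).
rewrite n1 in H1; rewrite n2 in H2.
have L12 : L h1 + L h2 = 0.
  have := Llin 1 _ _ d1 d2; rewrite mul1r => <-.
  rewrite -(L0 Llin); congr L; apply: funext => y; rewrite /h1 /h2; ring.
have A1 := dn_ge' (dual_add dl d1) x1.
have A2 := dn_ge' (dual_add dl d2) z1.
rewrite /= in A1 A2.
move: H1 H2 => /ler_normlP [_ H1] /ler_normlP [_ H2].
rewrite nl in H1 H2.
have P : eps / 4 * (t * dual_norm h) <= eps / 4 * t by rewrite ler_wpM2l // ltW.
have : t * (h x - h z) <= t * eps.
  rewrite /h1 /h2 in A1 A2.
  have E1 : t * (h x - h z) = t * h x + - t * h z by ring.
  rewrite E1.
  have E2 : t * eps = 4 * (eps / 4 * t) by field.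
  rewrite E2.
  have E3 : t * eps / 4 = eps / 4 * t by field.
  rewrite E3 in lx lz.
  lra.
by rewrite ler_pM2l.
Qed.

End PartA.

Section Misc.
Variable R : realType.

Lemma le_eps (a b : R) : (forall e, 0 < e -> a <= b + e) -> a <= b.
Proof.
move=> H; rewrite leNgt; apply/negP => ba.
have := H ((a - b) / 2) ltac:(rewrite divr_gt0 // subr_gt0 //); lra.
Qed.

Lemma inv_mono (N n : nat) : (N <= n)%N -> (n.+1%:R : R)^-1 <= (N.+1%:R)^-1.
Proof.
move=> Nn; rewrite lef_pV2 ?posrE ?ltr0Sn // ler_nat; exact: leq_trans Nn _.
Qed.

Lemma inv_small (d : R) : 0 < d -> exists N : nat, (N.+1%:R : R)^-1 < d.
Proof. by move=> d0; have [k] := ltr_add_invr d0; rewrite add0r; exists k. Qed.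

Lemma ev_of (P : nat -> Prop) N : (forall n, (N <= n)%N -> P n) -> \forall n \near \oo, P n.
Proof. by move=> H; apply: filterS (nbhs_infty_ge N). Qed.

Lemma ev_to (P : nat -> Prop) : (\forall n \near \oo, P n) -> exists N, forall n, (N <= n)%N -> P n.
Proof. by case => N _ H; exists N => n; apply: H. Qed.

End Misc.

Section PartC.
Variables (R : realType) (X : normedModType R).
Implicit Types (f g h : X -> R) (x y z : X).

Definition Sprop f := forall eps : R, 0 < eps -> exists2 d, 0 < d & forall x z h, `|x| <= 1 -> `|z| <= 1 ->
    dual_norm f - d < f x -> dual_norm f - d < f z -> is_dual h -> dual_norm h <= 1 ->
    h x - h z <= eps.

Definition Qprop f := forall eps : R, 0 < eps -> exists2 d, 0 < d & forall x z h, `|x| <= 1 -> `|z| <= 1 ->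
    dual_norm f - d < f x -> dual_norm f - d < f z -> is_dual h ->
    `|h x - h z| <= eps * dual_norm h.

Lemma Q_of_S f : Sprop f -> Qprop f.
Proof.
move=> S eps e0; have [d d0 Hd] := S eps e0; exists d => // x z h x1 z1 fx fz dh.
have [n0|] := eqVneq (dual_norm h) 0.
  by rewrite n0 mulr0 !(dn0_eq dh n0) subrr normr0.
move=> nz; have np : 0 < dual_norm h by rewrite lt_def nz dn_ge0.
pose k := fun y => (dual_norm h)^-1 * h y.
have dk : is_dual k by exact: dual_scale.
have nk : dual_norm k <= 1.
  by rewrite dn_scale // ger0_norm ?invr_ge0 ?dn_ge0 // mulVf.
have H1 := Hd x z k x1 z1 fx fz dk nk.
have H2 := Hd z x k z1 x1 fz fx dk nk.
have E : h x - h z = dual_norm h * (k x - k z).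
  by rewrite /k -mulrBr mulrA mulfV // mul1r.
rewrite E normrM ger0_norm ?dn_ge0 // mulrC ler_pM2r //.
by apply/ler_normlP; split => //; lra.
Qed.

Lemma frechet_of_Q f : is_dual f -> 0 < dual_norm f -> Qprop f ->
  dual_norm_frechet_at f.
Proof.
move=> df c0 Q.
have : forall n : nat, exists x, `|x| <= 1 /\ (dual_norm f) - (n.+1%:R)^-1 < f x.
  by move=> n; apply: dn_adh => //; rewrite invr_gt0 ltr0Sn.
move=> /choice [xs Hxs].
have close : forall eps, 0 < eps -> exists N0 : nat, forall h, is_dual h ->
    forall n m, (N0 <= n)%N -> (N0 <= m)%N -> `|h (xs n) - h (xs m)| <= eps * dual_norm h.
  move=> eps e0; have [d d0 Hd] := Q eps e0; have [N0 HN0] := inv_small d0.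
  exists N0 => h dh n m Nn Nm; have [n1 fn] := Hxs n; have [m1 fm] := Hxs m.
  apply: Hd => //.
    by apply: le_lt_trans fn; rewrite lerD2l lerN2; apply: le_trans (ltW HN0); exact: inv_mono.
  by apply: le_lt_trans fm; rewrite lerD2l lerN2; apply: le_trans (ltW HN0); exact: inv_mono.
have cvgh : forall h, is_dual h -> cvg ((fun n => h (xs n)) @ \oo).
  move=> h dh; apply: cauchy_cvg; apply: cauchy_exP => e e0.
  have ep : 0 < e / (dual_norm h + 1) by rewrite divr_gt0 // ltr_wpDl ?dn_ge0.
  have [N0 HN0] := close _ ep; exists (h (xs N0)); apply: (@ev_of (fun n => ball (h (xs N0)) e (h (xs n))) N0) => n Nn /=.
  rewrite -ball_normE /ball_ /=.
  apply: le_lt_trans (HN0 h dh N0 n (leqnn _) Nn) _.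
  rewrite mulrAC ltr_pdivrMr ?ltr_wpDl ?dn_ge0 // mulrDr mulr1 ltrDl //.
pose L := fun h : X -> R => lim ((fun n => h (xs n)) @ \oo).
have Lchar : forall h, is_dual h -> forall e, 0 < e -> exists N, forall n, (N <= n)%N ->
    `|L h - h (xs n)| <= e.
  move=> h dh e e0; have H := cvgr_dist_le _ _ (cvgh h dh) _ e0; exact: ev_to (H _).
have Lclose : forall eps, 0 < eps -> exists N0 : nat, forall h, is_dual h ->
    forall n, (N0 <= n)%N -> `|L h - h (xs n)| <= eps * dual_norm h.
  move=> eps e0; have [N0 HN0] := close _ e0; exists N0 => h dh n Nn.
  apply: le_eps => e' e'0; have [N1 HN1] := Lchar h dh e' e'0.
  pose m := maxn N0 N1.
  have h1 := HN1 m (leq_maxr _ _); have h2 := HN0 h dh m n (leq_maxl _ _) Nn.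
  have := ler_normD (L h - h (xs m)) (h (xs m) - h (xs n)).
  rewrite addrA subrK; lra.
exists L; split.
- move=> a h k dh dk.
  have c1 := cvgh _ (dual_scale a dh); have c2 := cvgh _ dk; have c3 := cvgh _ dh.
  rewrite /L.
  have -> : (fun n => a * h (xs n) + k (xs n)) = (fun n => a * h (xs n)) + (fun n => k (xs n)).
    by apply: funext.
  rewrite (limD c1 c2).
  have -> : (fun n => a * h (xs n)) = (a *: (fun n => h (xs n))).
    by apply: funext => n.
  by rewrite (limZl_tmp a c3).
- exists 1 => h dh; rewrite mul1r; apply: le_eps => e e0.
  have [N HN] := Lchar h dh e e0; have := HN N (leqnn _).
  have := dn_ge dh (proj1 (Hxs N)).
  have := ler_normD (L h - h (xs N)) (h (xs N)); rewrite subrK; lra.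
- move=> e e0; have e2 : 0 < e / 2 by rewrite divr_gt0.
  have [d d0 Hd] := Q _ e2.
  have [N0 HN0] := Lclose _ e2.
  exists (d / 3); first by rewrite divr_gt0.
  move=> h dh nh; 
  have dF := dual_add df dh.
  have nh0 := dn_ge0 dh.
  have eh : e / 2 * dual_norm h <= e * dual_norm h by rewrite ler_wpM2r //; lra.
  apply/ler_normlP; split.
  +
    apply: le_eps => eta eta0.
    have [N1 HN1] := inv_small eta0.
    have [n [Nn0 Nn1]] : exists n, (N0 <= n)%N /\ (N1 <= n)%N by exists (maxn N0 N1); rewrite leq_maxl leq_maxr.
    have [n1 fn] := Hxs n.
    have A := dn_ge' dF n1; rewrite /= in A.
    have B := HN0 h dh n Nn0.
    have C : (n.+1%:R : R)^-1 <= (N1.+1%:R)^-1 by exact: inv_mono.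
    move: B => /ler_normlP [B1 B2].
    move: (dual_norm (fun x => f x + h x)) A => NF A.
    move: (n.+1%:R^-1 : R) fn C => i1 fn C.
    move: (N1.+1%:R^-1 : R) HN1 C => i2 HN1 C.
    move: (e / 2 * dual_norm h) eh B1 B2 => u eh B1 B2.
    lra.
  +
    apply: le_eps => eta eta0.
    pose eta' := Num.min eta (d / 3).
    have eta'0 : 0 < eta' by rewrite lt_min eta0 divr_gt0.
    have e1 : eta' <= eta by rewrite ge_min lexx.
    have e2' : eta' <= d / 3 by rewrite ge_min lexx orbT.
    have [x [x1 Fx]] := dn_adh dF eta'0; rewrite /= in Fx.
    have hx := dn_ge' dh x1.
    have fx := dn_ge' df x1.
    have cF : (dual_norm f) <= dual_norm (fun x => f x + h x) + dual_norm h.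
      have dmh := dual_scale (-1) dh.
      have := dn_add dF dmh.
      rewrite dn_scale // normrN normr1 mul1r.
      have -> : (fun x => f x + h x + -1 * h x) = f.
        by apply: funext => y; ring.
      done.
    have [N1 HN1] := inv_small d0.
    have [n [Nn0 Nn1]] : exists n, (N0 <= n)%N /\ (N1 <= n)%N by exists (maxn N0 N1); rewrite leq_maxl leq_maxr.
    have [n1 fn] := Hxs n.
    have C : (n.+1%:R : R)^-1 <= (N1.+1%:R)^-1 by exact: inv_mono.
    have B := HN0 h dh n Nn0.
    move: B => /ler_normlP [B1 B2].
    have fxd : (dual_norm f) - d < f x by lra.
    have fnd : (dual_norm f) - d < f (xs n).
      by apply: le_lt_trans fn; rewrite lerD2l lerN2; exact: le_trans C (ltW HN1).
    have := Hd x (xs n) h x1 n1 fxd fnd dh => /ler_normlP [D1 D2].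
    lra.
Qed.

End PartC.

Section Mass.
Variable R : realType.

Lemma mass (m K : nat) (l : 'I_m -> R) (a b : 'I_m -> nat -> R) (th et : nat -> R) :
  (forall i, 0 <= l i) -> \sum_(i < m) l i = 1 ->
  (forall i n, a i n <= 1) -> (forall i n, b i n <= 1) -> (forall n, 0 < th n) ->
  (forall n, (n < K)%N -> 1 - et n < \sum_(i < m) l i * a i n) ->
  (forall n, (n < K)%N -> 1 - et n < \sum_(i < m) l i * b i n) ->
  \sum_(n < K) 2 * et n / th n < 1 ->
  exists i, forall n, (n < K)%N -> 1 - th n < a i n /\ 1 - th n < b i n.
Proof.
move=> l0 l1 a1 b1 th0 Ha Hb Hs.
pose phi i := \sum_(n < K) ((1 - a i n) + (1 - b i n)) / th n.
have E : \sum_(i < m) l i * phi i =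
    \sum_(n < K) ((1 - \sum_(i < m) l i * a i n) + (1 - \sum_(i < m) l i * b i n)) / th n.
  rewrite /phi.
  under eq_bigr do rewrite mulr_sumr.
  rewrite exchange_big /=; apply: eq_bigr => n _.
  under eq_bigr do rewrite mulrA.
  rewrite -mulr_suml; congr (_ * _).
  rewrite -[in RHS]l1 -!sumrB -big_split /=; apply: eq_bigr => i _; ring.
have Hle : \sum_(i < m) l i * phi i < 1.
  rewrite E; apply: le_lt_trans Hs; apply: ler_sum => n _.
  rewrite ler_wpM2r ?invr_ge0 ?ltW //.
  have := Ha n (ltn_ord n); have := Hb n (ltn_ord n); lra.
have [i phi1] : exists i, phi i < 1.
  apply: contrapT => H.
  have : \sum_(i < m) l i * 1 <= \sum_(i < m) l i * phi i.
    apply: ler_sum => i _; rewrite ler_wpM2l //.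
    by rewrite leNgt; apply/negP => Hi; apply: H; exists i.
  under eq_bigr do rewrite mulr1.
  by rewrite l1; lra.
exists i => n Kn.
have t0 : forall j : 'I_K, 0 <= ((1 - a i j) + (1 - b i j)) / th j.
  move=> j; apply: divr_ge0; last exact: ltW.
  by have := a1 i j; have := b1 i j; lra.
have : ((1 - a i n) + (1 - b i n)) / th n <= phi i.
  rewrite /phi (bigD1 (Ordinal Kn)) //= lerDl.
  by apply: sumr_ge0 => j _; exact: t0.
have ta := a1 i n; have tb := b1 i n; have tn := th0 n.
move=> H; have H2 : (1 - a i n) + (1 - b i n) < th n.
  have H3 := le_lt_trans H phi1; by rewrite ltr_pdivrMr // mul1r in H3.
lra.
Qed.

Definition rr : R := 2^-1.
Definition th (n : nat) : R := rr ^+ n.+1.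
Definition et (n : nat) : R := th n * rr ^+ n.+2.

Lemma th_gt0 n : 0 < th n.
Proof. by rewrite /th exprn_gt0 // /rr invr_gt0. Qed.

Lemma et_gt0 n : 0 < et n.
Proof. by rewrite /et mulr_gt0 ?th_gt0 // exprn_gt0 // /rr invr_gt0. Qed.

Lemma geo K : \sum_(n < K) 2 * et n / th n < 1.
Proof.
have E : forall n, 2 * et n / th n = rr ^+ n.+1.
  move=> n; rewrite /et (mulrC (th n)) mulrA -mulrA mulfV ?gt_eqF ?th_gt0 // mulr1.
  by rewrite exprS mulrA /rr mulfV // mul1r.
have -> : \sum_(n < K) 2 * et n / th n = 1 - rr ^+ K.
  elim: K => [|K IH]; first by rewrite big_ord0 expr0 subrr.
  by rewrite big_ord_recr /= IH E exprS /rr; field.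
 have : 0 < rr ^+ K by rewrite exprn_gt0 // /rr invr_gt0.
lra.
Qed.

Lemma th_small d : 0 < d -> exists n, th n < d.
Proof.
move=> d0; have [k] := ltr_add_invr d0; rewrite add0r => Hk; exists k.
apply: le_lt_trans Hk; rewrite /th /rr exprVn lef_pV2 ?posrE ?exprn_gt0 ?ltr0Sn //.
rewrite -natrX ler_nat; apply: ltnW; exact: ltn_expl.
Qed.

End Mass.

Section PartB.
Variables (R : realType) (X : normedModType R).
Implicit Types (f g h : X -> R) (x y z : X).

Lemma ev_cont (x : X) : continuous (fun p : {ptws X -> R} => p x).
Proof. exact: (@proj_continuous X (fun _ => R) x). Qed.

Lemma open_gt_ev (x : X) (a : R) : open [set p : {ptws X -> R} | a < p x].
Proof.
have -> : [set p : {ptws X -> R} | a < p x] = (fun p : {ptws X -> R} => p x) @^-1` [set y | a < y] by [].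
apply: open_comp; last exact: open_gt.
move=> p _; exact (@ev_cont x p).
Qed.

Lemma closed_ge_ev (x : X) (a : R) : closed [set p : {ptws X -> R} | a <= p x].
Proof.
have -> : [set p : {ptws X -> R} | a <= p x] = (fun p : {ptws X -> R} => p x) @^-1` [set y | a <= y] by [].
apply: preimage_closed; last exact: closed_ge.
move=> p _; exact (@ev_cont x p).
Qed.

Lemma open_U (xs zs : nat -> X) (c : nat -> R) K :
  open [set p : {ptws X -> R} | forall n, (n < K)%N -> c n < p (xs n) /\ c n < p (zs n)].
Proof.
elim: K => [|K IH].
  have -> : [set p : {ptws X -> R} | forall n, (n < 0)%N -> c n < p (xs n) /\ c n < p (zs n)] = setT.
    by apply/seteqP; split => p //= _ n.
  exact: openT.
have -> : [set p : {ptws X -> R} | forall n, (n < K.+1)%N -> c n < p (xs n) /\ c n < p (zs n)] =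
  [set p : {ptws X -> R} | forall n, (n < K)%N -> c n < p (xs n) /\ c n < p (zs n)] `&`
  ([set p : {ptws X -> R} | c K < p (xs K)] `&` [set p : {ptws X -> R} | c K < p (zs K)]).
  apply/seteqP; split => p /=.
    move=> H; split; first by move=> n Kn; apply: H; exact: ltnW.
    by have [] := H K (ltnSn K).
  move=> [H [H1 H2]] n; rewrite ltnS leq_eqVlt => /orP [/eqP -> //|]; exact: H.
by apply: openI => //; apply: openI; exact: open_gt_ev.
Qed.

Lemma partB (Lam : set (X -> R)) : Lam `<=` @dual_ball R X ->
  @compact {ptws X -> R} Lam ->
  (forall g, @dual_ball R X g -> @closure {ptws X -> R} (conv_hull Lam) g) ->
  (forall f, Lam f -> @dual_sphere R X f -> dual_norm_frechet_at f) ->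
  forall g, is_dual g -> dual_norm g = 1 -> Sprop g.
Proof.
move=> Hb Hc Hcl Hfr g dg ng eps e0.
apply: contrapT => H.
have bad : forall n : nat, exists w : X * X * (X -> R),
   [/\ `|w.1.1| <= 1, `|w.1.2| <= 1, 1 - et R n < g w.1.1, 1 - et R n < g w.1.2 &
       [/\ is_dual w.2, dual_norm w.2 <= 1 & eps < w.2 w.1.1 - w.2 w.1.2]].
  move=> n; apply: contrapT => Hn; apply: H; exists (et R n); first exact: et_gt0.
  move=> x z h x1 z1 gx gz dh nh; rewrite ng in gx gz.
  rewrite leNgt; apply/negP => lt; apply: Hn; exists (x, z, h); split => //.
have [w Hw] := choice bad.
pose xs n := (w n).1.1; pose zs n := (w n).1.2; pose hs n := (w n).2.
have Lb : forall q x, Lam q -> `|x| <= 1 -> q x <= 1.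
  move=> q x Lq x1; have [dq nq] := Hb q Lq; exact: le_trans (dn_ge' dq x1) nq.
have step : forall K, exists q, Lam q /\
    forall n, (n < K)%N -> 1 - th R n < q (xs n) /\ 1 - th R n < q (zs n).
  move=> K.
  pose U := [set p : {ptws X -> R} | forall n, (n < K)%N ->
     1 - et R n < p (xs n) /\ 1 - et R n < p (zs n)].
  have oU : open U by exact: open_U.
  have Ug : U g by move=> n _; have [_ _ ? ? _] := Hw n.
  have gb : @dual_ball R X g by split => //; rewrite ng.
  have [p [[m [l [gs [l0 [l1 [Lg pe]]]]]] Up]] := Hcl g gb U (open_nbhs_nbhs (conj oU Ug)).
  rewrite pe in Up.
  have [i Hi] := @mass R m K l (fun i n => gs i (xs n)) (fun i n => gs i (zs n))
    (th R) (et R) l0 l1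
    (fun i n => Lb _ _ (Lg i) (let: And5 h _ _ _ _ := Hw n in h))
    (fun i n => Lb _ _ (Lg i) (let: And5 _ h _ _ _ := Hw n in h))
    (@th_gt0 R) (fun n Kn => (Up n Kn).1) (fun n Kn => (Up n Kn).2) (geo R K).
  by exists (gs i); split.
have [lam Hlam] := choice step.
have [p0 [Lp0 clp0]] := Hc (lam @ \oo) _ (@ev_of (fun K => Lam (lam K)) 0 (fun K _ => (Hlam K).1)).
have Cx : forall n, 1 - th R n <= p0 (xs n).
  move=> n; have cC := @closed_ge_ev (xs n) (1 - th R n).
  have /seteqP [_ sub] := (closure_id _).1 cC; apply: (sub p0) => B nB.
  apply: clp0 nB; apply: (@ev_of (fun K => 1 - th R n <= lam K (xs n)) n.+1).
  by move=> K nK; apply: ltW; have [_ /(_ n nK) []] := Hlam K.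
have Cz : forall n, 1 - th R n <= p0 (zs n).
  move=> n; have cC := @closed_ge_ev (zs n) (1 - th R n).
  have /seteqP [_ sub] := (closure_id _).1 cC; apply: (sub p0) => B nB.
  apply: clp0 nB; apply: (@ev_of (fun K => 1 - th R n <= lam K (zs n)) n.+1).
  by move=> K nK; apply: ltW; have [_ /(_ n nK) []] := Hlam K.
have [dp0 np0] := Hb p0 Lp0.
have np1 : dual_norm p0 = 1.
  apply/eqP; rewrite eq_le np0 /=; apply: le_eps => d d0.
  have [n Hn] := th_small d0.
  have [x1 _ _ _ _] := Hw n.
  have := dn_ge' dp0 x1; have := Cx n; rewrite /xs; lra.
have [d d0 Hd] := frechet_slice dp0 np1 (Hfr p0 Lp0 (conj dp0 np1)) e0.
have [n Hn] := th_small d0.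
have [x1 z1 _ _ [dh nh lt]] := Hw n.
have := Hd _ _ _ x1 z1 _ _ dh nh.
have := Cx n; have := Cz n; rewrite /xs /zs.
move=> c1 c2 H3.
have : (w n).2 (w n).1.1 - (w n).2 (w n).1.2 <= eps by apply: H3; lra.
lra.
Qed.

End PartB.

Unset Implicit Arguments.

Theorem lemma3p1 (R : realType) (X : completeNormedModType R)
  (Lam : set (X -> R)) :
  Lam `<=` @dual_ball R X ->
  wstar_compact Lam ->
  wstar_closure (conv_hull Lam) = @dual_ball R X ->
  (forall f, Lam f -> @dual_sphere R X f -> dual_norm_frechet_at f) ->
  @dual_frechet_smooth R X.
Proof.
move=> HLb [_ Hc] Hcl Hfr f df fnz.
have Hcl' : forall g, @dual_ball R X g -> @closure {ptws X -> R} (conv_hull Lam) g.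
  by move=> g gb; rewrite -Hcl in gb; exact: gb.1.
have df' : is_dual f := df.
have c0 : 0 < dual_norm f.
  rewrite lt_def dn_ge0 // andbT; apply/eqP => n0; apply: fnz.
  by apply: funext => x; exact: dn0_eq.
pose g := fun x => (dual_norm f)^-1 * f x.
have dg : is_dual g by exact: dual_scale.
have ng : dual_norm g = 1.
  by rewrite dn_scale // ger0_norm ?invr_ge0 ?dn_ge0 // mulVf // gt_eqF.
have Sg := partB HLb Hc Hcl' Hfr dg ng.
have Sf : Sprop f.
  move=> eps e0; have [d d0 Hd] := Sg eps e0.
  exists (dual_norm f * d); first exact: mulr_gt0.
  move=> x z h x1 z1 fx fz dh nh; apply: Hd => //; rewrite ng.
  - have -> : 1 - d = (dual_norm f)^-1 * (dual_norm f - dual_norm f * d).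
      by field; rewrite gt_eqF.
    by rewrite /g ltr_pM2l ?invr_gt0.
  - have -> : 1 - d = (dual_norm f)^-1 * (dual_norm f - dual_norm f * d).
      by field; rewrite gt_eqF.
    by rewrite /g ltr_pM2l ?invr_gt0.
exact: frechet_of_Q df' c0 (Q_of_S Sf).
Qed.
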